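(* Let $p_1,p_2$ be real bivariate polynomials with $p_1\neq 0$, $\deg p_2\le \deg p_1+1$, and suppose $p_1$ has no multiple factors. Then there is $\epsilon_0>0$ such that for every $\epsilon$ with $|\epsilon|<\epsilon_0$ the polynomial $p_1+\epsilon p_2$ has no multiple factors.
   Context: A polynomial $p$ has a multiple factor if $r^2$ divides $p$ for some polynomial $r$ of degree $\ge 1$. *)

(* Defs.v *)
From HB Require Import structures.
From mathcomp Require Import all_boot all_order all_algebra.
From mathcomp Require Import reals.
From mathcomp Require Import mpoly.
Set Implicit Arguments. Unset Strict Implicit. Unset Printing Implicit Defensive.
Import Order.TTheory GRing.Theory Num.Theory.
Local Open Scope ring_scope.

(* Real bivariate polynomials: {mpoly R[2]} with R : realType.
   Total degree: msize p = 1 + total degree of p (msize 0 = 0). *)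

Definition has_multiple_factor (R : realType) (p : {mpoly R[2]}) : Prop :=
  exists r : {mpoly R[2]}, (1 < msize r)%N /\ exists q : {mpoly R[2]}, p = r ^+ 2 * q.

(* Main.v *)
Require Import Defs.
From HB Require Import structures.
From mathcomp Require Import all_boot all_order all_algebra.
From mathcomp Require Import reals.
From mathcomp Require Import mpoly.
From mathcomp Require Import all_classical topology normedtype matrix_normedtype derive.
From mathcomp Require Import zify.
Import Order.TTheory GRing.Theory Num.Theory.
Import numFieldNormedType.Exports.
Local Open Scope ring_scope.
Local Open Scope classical_set_scope.

Section Aux.
Variable R : realType.
Notation P := {mpoly R[2]}.

Definition nrm (M : nat) (p : P) : R := \sum_(m : 'X_{1..2 < M}) `|p@_m|.

Lemma nrm_ge0 M p : 0 <= nrm M p.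
Proof. by apply: sumr_ge0 => m _. Qed.

Lemma nrmD M p q : nrm M (p + q) <= nrm M p + nrm M q.
Proof.
rewrite /nrm -big_split /=; apply: ler_sum => m _.
by rewrite mcoeffD ler_normD.
Qed.

Lemma nrmZ M c p : nrm M (c *: p) = `|c| * nrm M p.
Proof.
by rewrite /nrm mulr_sumr; apply: eq_bigr => m _; rewrite mcoeffZ normrM.
Qed.

Lemma nrmN M p : nrm M (- p) = nrm M p.
Proof. by rewrite -scaleN1r nrmZ normrN normr1 mul1r. Qed.

Lemma nrm_eq0 M p : (msize p <= M)%N -> nrm M p = 0 -> p = 0.
Proof.
move=> hs h0; rewrite (mpolywE hs); apply: big1 => m _.
have := @psumr_eq0P R _ xpredT (fun i : 'X_{1..2 < M} => `|p@_i|) (fun i _ => normr_ge0 _) h0 m isT.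
by move/normr0_eq0 ->; rewrite scale0r.
Qed.

Lemma nrm_gt0 M p : (msize p <= M)%N -> p != 0 -> 0 < nrm M p.
Proof.
move=> hs hp; rewrite lt_def nrm_ge0 andbT; apply/eqP => h.
by move/eqP: hp; apply; apply: nrm_eq0 h.
Qed.

Lemma msize_sumX k (E : 'X_{1..2 < k} -> R) :
  (msize (\sum_(m : 'X_{1..2 < k}) E m *: 'X_[m]) <= k)%N.
Proof.
apply: leq_trans (msize_sum _ _ _) _.
apply/bigmax_leqP => m _.
apply: leq_trans (msizeZ_le _ _) _.
by rewrite msizeX; apply: bmdeg.
Qed.

Lemma coef_sumX k (E : 'X_{1..2 < k} -> R) (m : 'X_{1..2 < k}) :
  (\sum_(i : 'X_{1..2 < k}) E i *: 'X_[i])@_m = E m.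
Proof.
rewrite raddf_sum (bigD1 m) //= big1 ?addr0.
  by rewrite mcoeffZ mcoeffX eqxx mulr1.
move=> i hi; rewrite mcoeffZ mcoeffX.
by rewrite -bmeqP (negbTE hi) mulr0.
Qed.

Lemma nrm_sumX k (E : 'X_{1..2 < k} -> R) :
  nrm k (\sum_(m : 'X_{1..2 < k}) E m *: 'X_[m]) = \sum_(m : 'X_{1..2 < k}) `|E m|.
Proof.
by apply: eq_bigr => m _; rewrite coef_sumX.
Qed.

Lemma cont_sum (T : topologicalType) (I : Type) (r : seq I) (Pr : pred I)
  (f : I -> T -> R) : (forall i, continuous (f i)) ->
  continuous (fun z => \sum_(i <- r | Pr i) f i z).
Proof.
move=> hf; elim: r => [|i r IH].
  have -> : (fun z => \sum_(i <- [::] | Pr i) f i z) = (fun=> 0).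
    by apply: funext => z; rewrite big_nil.
  by move=> z; apply: cst_continuous.
case: (boolP (Pr i)) => hi.
  have -> : (fun z => \sum_(j <- i :: r | Pr j) f j z) =
            (fun z => f i z + \sum_(j <- r | Pr j) f j z).
    by apply: funext => z; rewrite big_cons hi.
  by move=> z; apply: continuousD; [apply: hf | apply: IH].
have -> : (fun z => \sum_(j <- i :: r | Pr j) f j z) =
          (fun z => \sum_(j <- r | Pr j) f j z).
  by apply: funext => z; rewrite big_cons (negbTE hi).
exact: IH.
Qed.

Definition cc {T : topologicalType} (F : T -> P) :=
  forall m, continuous (fun z => (F z)@_m).

Lemma cc_mul (T : topologicalType) (F G : T -> P) :
  cc F -> cc G -> cc (fun z => F z * G z).
Proof.
move=> hF hG m.
have -> : (fun z => (F z * G z)@_m) = (fun z =>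
    \sum_(k : 'X_{1..2 < (mdeg m).+1, (mdeg m).+1} | m == (k.1 + k.2)%MM)
      ((F z)@_k.1 * (G z)@_k.2)).
  by apply: funext => z; rewrite mcoeffM.
apply: cont_sum => k z; apply: continuousM; [apply: hF | apply: hG].
Qed.

Lemma cc_subC (T : topologicalType) (F : T -> P) p :
  cc F -> cc (fun z => F z - p).
Proof.
move=> hF m.
have -> : (fun z => (F z - p)@_m) = (fun z => (F z)@_m - p@_m).
  by apply: funext => z; rewrite mcoeffB.
move=> z; apply: continuousB; [apply: hF | apply: cst_continuous].
Qed.

Lemma cc_nrm (T : topologicalType) (F : T -> P) M :
  cc F -> continuous (fun z => nrm M (F z)).
Proof.
move=> hF; apply: cont_sum => m z.
apply: (continuous_comp (f := fun z => (F z)@_m) (g := Num.norm)).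
  exact: hF.
exact: norm_continuous.
Qed.

Section Vec.
Variables a b : nat.
Definition Ka k := #|{: 'X_{1..2 < k}}|.
Definition V := 'rV[R]_(Ka a + Ka b).
Definition cu (z : V) (m : 'X_{1..2 < a}) := z ord0 (lshift (Ka b) (enum_rank m)).
Definition cw (z : V) (m : 'X_{1..2 < b}) := z ord0 (rshift (Ka a) (enum_rank m)).
Definition eu (z : V) : P := \sum_(m : 'X_{1..2 < a}) cu z m *: 'X_[m].
Definition ew (z : V) : P := \sum_(m : 'X_{1..2 < b}) cw z m *: 'X_[m].
Definition enc (r q : P) : V :=
  row_mx (\row_(i < Ka a) r@_(enum_val i)) (\row_(i < Ka b) q@_(enum_val i)).

Lemma eu_enc r q : (msize r <= a)%N -> eu (enc r q) = r.
Proof.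
move=> hr; rewrite [RHS](mpolywE hr); apply: eq_bigr => m _.
by rewrite /cu /enc row_mxEl mxE enum_rankK.
Qed.

Lemma ew_enc r q : (msize q <= b)%N -> ew (enc r q) = q.
Proof.
move=> hr; rewrite [RHS](mpolywE hr); apply: eq_bigr => m _.
by rewrite /cw /enc row_mxEr mxE enum_rankK.
Qed.

Lemma cc_eu : cc eu.
Proof.
move=> m.
have -> : (fun z => (eu z)@_m) =
   (fun z => \sum_(i : 'X_{1..2 < a}) cu z i * 'X_[i]@_m).
  apply: funext => z; rewrite /eu raddf_sum; apply: eq_bigr => i _.
  exact: mcoeffZ.
apply: cont_sum => i z; apply: continuousM; last exact: cst_continuous.
exact: (@coord_continuous R 1 (Ka a + Ka b) ord0 (lshift (Ka b) (enum_rank i))).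
Qed.

Lemma cc_ew : cc ew.
Proof.
move=> m.
have -> : (fun z => (ew z)@_m) =
   (fun z => \sum_(i : 'X_{1..2 < b}) cw z i * 'X_[i]@_m).
  apply: funext => z; rewrite /ew raddf_sum; apply: eq_bigr => i _.
  exact: mcoeffZ.
apply: cont_sum => i z; apply: continuousM; last exact: cst_continuous.
exact: (@coord_continuous R 1 (Ka a + Ka b) ord0 (rshift (Ka a) (enum_rank i))).
Qed.

Lemma msize_eu z : (msize (eu z) <= a)%N. Proof. exact: msize_sumX. Qed.
Lemma msize_ew z : (msize (ew z) <= b)%N. Proof. exact: msize_sumX. Qed.


Definition nu (z : V) := \sum_(m : 'X_{1..2 < a}) `|cu z m|.
Definition nw (z : V) := \sum_(m : 'X_{1..2 < b}) `|cw z m|.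

Lemma nu_cont : continuous nu.
Proof.
apply: cont_sum => m z.
apply: (continuous_comp (f := fun z : V => cu z m) (g := Num.norm)).
  exact: (@coord_continuous R 1 (Ka a + Ka b) ord0 (lshift (Ka b) (enum_rank m))).
exact: norm_continuous.
Qed.

Lemma nw_cont : continuous nw.
Proof.
apply: cont_sum => m z.
apply: (continuous_comp (f := fun z : V => cw z m) (g := Num.norm)).
  exact: (@coord_continuous R 1 (Ka a + Ka b) ord0 (rshift (Ka a) (enum_rank m))).
exact: norm_continuous.
Qed.

Lemma nrm_eu z : nrm a (eu z) = nu z.
Proof. exact: nrm_sumX. Qed.
Lemma nrm_ew z : nrm b (ew z) = nw z.
Proof. exact: nrm_sumX. Qed.

Lemma coord_le (z : V) j : `|z ord0 j| <= Num.max (nu z) (nw z).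
Proof.
case: (splitP j) => i hi.
  have -> : j = lshift (Ka b) i by apply: val_inj.
  have -> : z ord0 (lshift (Ka b) i) = cu z (enum_val i) by rewrite /cu enum_valK.
  rewrite le_max; apply/orP; left.
  rewrite /nu (bigD1 (enum_val i)) //= lerDl.
  by apply: sumr_ge0 => m _.
have -> : j = rshift (Ka a) i by apply: val_inj.
have -> : z ord0 (rshift (Ka a) i) = cw z (enum_val i) by rewrite /cw enum_valK.
rewrite le_max; apply/orP; right.
rewrite /nw (bigD1 (enum_val i)) //= lerDl.
by apply: sumr_ge0 => m _.
Qed.

Lemma compact_box (A : set V) C : closed A ->
  (forall z, A z -> nu z <= C /\ nw z <= C) -> compact A.
Proof.
move=> cA hA; apply: bounded_closed_compact => //.
exists C; split; first by rewrite num_real.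
move=> x Cx z Az.
rewrite /=; have -> : `|z| = mx_norm z by [].
rewrite mx_normrE.
apply: bigmax_le => [|ij _].
  by apply: le_trans (ltW Cx); have [h1 _] := hA z Az; apply: le_trans h1; apply: sumr_ge0.
rewrite (ord1 ij.1); apply: le_trans (coord_le z ij.2) _.
have [h1 h2] := hA z Az; rewrite ge_max; apply/andP; split; apply: le_trans (ltW Cx) => //.
Qed.

End Vec.
Arguments cu {a b}. Arguments cw {a b}. Arguments eu {a b}. Arguments ew {a b}.
Arguments nu {a b}. Arguments nw {a b}. Arguments nrm_eu {a b}. Arguments nrm_ew {a b}.
Arguments msize_eu {a b}. Arguments msize_ew {a b}.

Lemma posmin n (S : set 'rV[R]_n) (f : 'rV[R]_n -> R) : compact S -> continuous f ->
  (forall z, S z -> 0 < f z) -> exists2 mu, 0 < mu & forall z, S z -> mu <= f z.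
Proof.
move=> cS cf hp; case: (pselect (S !=set0)) => [S0|S0].
  have [c cS' minf] := EVT_min_rV S0 cS (@continuous_subspaceT _ _ S f cf).
  rewrite inE in cS'; exists (f c); first exact: hp.
  by move=> z Sz; apply: minf; rewrite inE.
exists 1 => // z Sz; exfalso; apply: S0; by exists z.
Qed.


Lemma nrm0 M : nrm M 0 = 0.
Proof. by rewrite /nrm big1 // => m _; rewrite mcoeff0 normr0. Qed.

Lemma msize_eq0 (p : P) : msize p = 0%N -> p = 0.
Proof.
move=> h; have /msize1_polyC hp : (msize p <= 1)%N by rewrite h.
move: h; rewrite hp msizeC; case: eqP => // -> _; exact: mpolyC0.
Qed.

Lemma msize_gt0 (p : P) : p != 0 -> (0 < msize p)%N.
Proof. by move=> hp; rewrite lt0n; apply/eqP => /msize_eq0 h; rewrite h eqxx in hp. Qed.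

Lemma factor_small (d : nat) (f r q : P) : f = r ^+ 2 * q -> (1 < msize r)%N ->
  (msize f <= d.+1)%N -> exists r' : P, exists q' : P,
  [/\ r' != 0, (msize r' <= d.+1)%N, (msize q' <= d.-1)%N & f = r' ^+ 2 * q'].
Proof.
move=> hf hr hs.
have [q0|qn0] := eqVneq q 0.
  exists 1, 0; split => //; first exact: oner_neq0.
    by rewrite msize1.
  by rewrite msize0.
  by rewrite hf q0 !mulr0.
have rn0 : r != 0 by apply/eqP => r0; rewrite r0 msize0 in hr.
exists r, q; split => //.
  move: hs; rewrite hf expr2 msizeM ?mulf_neq0 // msizeM //.
  have := @msize_gt0 q qn0; move: hr; rewrite -!subn1; move: (msize r) (msize q) => x y; lia.
move: hs; rewrite hf expr2 msizeM ?mulf_neq0 // msizeM //.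
move: hr; rewrite -!subn1; move: (msize r) (msize q) => x y; lia.
Qed.


Lemma no_exact (p1 : P) a b (z : V a b) : ~ has_multiple_factor p1 ->
  (b < msize p1)%N -> nu z = 1 -> eu z ^+ 2 * ew z != p1.
Proof.
move=> hnm hb hz; apply/eqP => E.
have eun0 : eu z != 0.
  apply/eqP => h; have := hz; rewrite -nrm_eu h nrm0 => h01.
  by move: (@oner_neq0 R); rewrite -h01 eqxx.
case: (leqP 2 (msize (eu z))) => hs.
  apply: hnm; exists (eu z); split => //; exists (ew z); by rewrite E.
have hc := @msize1_polyC _ _ (eu z) hs.
have cn0 : (eu z)@_0 != 0.
  by apply: contra eun0 => /eqP h; rewrite hc h mpolyC0.
move: E; rewrite hc -rmorphXn /= mul_mpolyC => E.
have : msize p1 = msize (ew z) by rewrite -E msizeZ // expf_neq0.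
have := msize_ew z; move: hb; move: (msize p1) (msize (ew z)) => x y; lia.
Qed.


Lemma main_aux (p1 p2 : P) : p1 != 0 -> (msize p2 <= (msize p1).+1)%N ->
  ~ has_multiple_factor p1 -> exists2 e0 : R, 0 < e0 &
    forall e : R, `|e| < e0 -> ~ has_multiple_factor (p1 + e *: p2).
Proof.
move=> p1n0 hp2 hnm.
set d := msize p1.
have d0 : (0 < d)%N := msize_gt0 _ p1n0.
pose a := d.+1; pose b := d.-1.
pose M := (a + a + b + d).+2.
have hM : forall z : V a b, (msize (eu z * eu z * ew z) <= M)%N.
  move=> z; apply: leq_trans (msizeM_le _ _) _.
  have := msizeM_le (eu z) (eu z); have := msize_eu z; have := msize_ew z.
  rewrite /M /d; move: (msize (eu z)) (msize (ew z)) (msize (eu z * eu z)) => x y w.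
  lia.
have hM' : forall z : V a b, (msize (eu z * eu z * ew z - p1) <= M)%N.
  move=> z; apply: leq_trans (msizeD_le _ _) _; rewrite msizeN geq_max hM /=.
  rewrite /M /d; lia.
pose G := fun z : V a b => nrm M (eu z * eu z * ew z).
pose S1 := [set z : V a b | nu z = 1 /\ nw z = 1].
have cS1 : compact S1.
  apply: (@compact_box a b _ 1); last by move=> z [-> ->].
  apply: closedI.
    apply: (@preimage_closed _ _ nu [set x | x = 1]); last exact: closed_eq.
    by move=> x _; apply: nu_cont.
  apply: (@preimage_closed _ _ nw [set x | x = 1]); last exact: closed_eq.
  by move=> x _; apply: nw_cont.
have ccP : cc (fun z : V a b => eu z * eu z * ew z).
  by apply: cc_mul; [apply: cc_mul; apply: cc_eu | apply: cc_ew].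
have euN : forall z : V a b, nu z = 1 -> eu z != 0.
  move=> z hz; apply/eqP => h; have := hz; rewrite -nrm_eu h nrm0 => h01.
  by move: (@oner_neq0 R); rewrite -h01 eqxx.
have ewN : forall z : V a b, nw z = 1 -> ew z != 0.
  move=> z hz; apply/eqP => h; have := hz; rewrite -nrm_ew h nrm0 => h01.
  by move: (@oner_neq0 R); rewrite -h01 eqxx.
have [c c0 hc] : exists2 c, 0 < c & forall z, S1 z -> c <= G z.
  apply: posmin => //; first exact: cc_nrm.
  move=> z [h1 h2]; apply: nrm_gt0 (hM z) _.
  by rewrite !mulf_neq0 // ?euN ?ewN.
pose B := (nrm M p1 + nrm M p2) / c.
have B0 : 0 <= B by rewrite divr_ge0 ?addr_ge0 ?nrm_ge0 // ltW.
pose F := fun z : V a b => nrm M (eu z * eu z * ew z - p1).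
pose S := [set z : V a b | nu z = 1 /\ nw z <= B].
have cS : compact S.
  apply: (@compact_box a b _ (Num.max 1 B)); last first.
    by move=> z [-> h]; rewrite !le_max lexx h orbT.
  apply: closedI.
    apply: (@preimage_closed _ _ nu [set x | x = 1]); last exact: closed_eq.
    by move=> x _; apply: nu_cont.
  apply: (@preimage_closed _ _ nw [set x | x <= B]); last exact: closed_le.
  by move=> x _; apply: nw_cont.
have [mu mu0 hmu] : exists2 mu, 0 < mu & forall z, S z -> mu <= F z.
  apply: posmin => //; first by apply: cc_nrm; apply: cc_subC.
  move=> z [h1 h2]; apply: nrm_gt0 (hM' z) _.
  rewrite subr_eq0 -expr2; apply: no_exact => //.
  by rewrite /b /d; move: d0; lia.
have n20 := nrm_ge0 M p2.
exists (Num.min 1 (mu / (nrm M p2 + 1))).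
  rewrite lt_min ltr01 /= divr_gt0 //.
  by apply: lt_le_trans ltr01 _; rewrite lerDr.
move=> e he [r [hr [q hf]]].
move: he; rewrite lt_min => /andP [he1 he2].
have hfs : (msize (p1 + e *: p2) <= d.+1)%N.
  apply: leq_trans (msizeD_le _ _) _; rewrite geq_max leqnSn /=.
  exact: leq_trans (msizeZ_le _ _) hp2.
have [r' [q' [r'n0 hr' hq' hf']]] := @factor_small d _ _ _ hf hr hfs.
pose s := nrm a r'.
have s0 : 0 < s := @nrm_gt0 a r' hr' r'n0.
pose r2 := s^-1 *: r'; pose q2 := (s ^+ 2) *: q'.
have hf2 : p1 + e *: p2 = r2 ^+ 2 * q2.
  rewrite hf' /r2 /q2 exprZn -scalerAl -scalerAr scalerA exprVn mulVf ?scale1r //.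
  by rewrite expf_neq0 // gt_eqF.
have hr2 : (msize r2 <= a)%N := leq_trans (msizeZ_le _ _) hr'.
have hq2 : (msize q2 <= b)%N := leq_trans (msizeZ_le _ _) hq'.
have nr2 : nrm a r2 = 1.
  by rewrite /r2 nrmZ ger0_norm ?invr_ge0 ?ltW // mulVf // gt_eqF.
pose z := enc a b r2 q2.
have ez : eu z = r2 by apply: eu_enc.
have wz : ew z = q2 by apply: ew_enc.
have nuz : nu z = 1 by rewrite -nrm_eu ez.
have hnf : nrm M (p1 + e *: p2) <= nrm M p1 + nrm M p2.
  apply: le_trans (nrmD _ _ _) _; rewrite lerD2l nrmZ.
  by rewrite ler_piMl // ltW.
have nwz : nw z <= B.
  rewrite -nrm_ew wz.
  have [q20|q2n0] := eqVneq q2 0; first by rewrite q20 nrm0.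
  pose t := nrm b q2.
  have t0 : 0 < t := @nrm_gt0 b q2 hq2 q2n0.
  pose z1 := enc a b r2 (t^-1 *: q2).
  have hq3 : (msize (t^-1 *: q2) <= b)%N := leq_trans (msizeZ_le _ _) hq2.
  have : S1 z1.
    split; first by rewrite -nrm_eu /z1 eu_enc.
    by rewrite -nrm_ew /z1 ew_enc // nrmZ ger0_norm ?invr_ge0 ?ltW // mulVf // gt_eqF.
  move/hc; rewrite /G /z1 eu_enc // ew_enc // -expr2 -scalerAr nrmZ -hf2.
  have ti : 0 <= t^-1 by rewrite invr_ge0 ltW.
  rewrite (ger0_norm ti) ler_pdivlMl // => h.
  rewrite /B ler_pdivlMr //; exact: le_trans h hnf.
have Sz : S z by split.
have := hmu z Sz; rewrite /F ez wz -expr2 -hf2 addrC addKr nrmZ.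
move: he2; rewrite ltr_pdivlMr ?(lt_le_trans ltr01) ?lerDr // => he2.
have : `|e| * nrm M p2 < mu.
  apply: le_lt_trans he2; rewrite mulrDr mulr1 lerDl //.
by move=> h1 h2; move: (le_lt_trans h2 h1); rewrite ltxx.
Qed.

End Aux.

Local Close Scope classical_set_scope.

Theorem mainTheorem4 (R : realType) (p1 p2 : {mpoly R[2]}) :
  p1 != 0 ->
  (msize p2 <= (msize p1).+1)%N ->
  ~ has_multiple_factor p1 ->
  exists2 e0 : R, 0 < e0 &
    forall e : R, `|e| < e0 -> ~ has_multiple_factor (p1 + e *: p2).
Proof. exact: main_aux. Qed.
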